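(* Let $X$ be a compactum, let $n\geq2$, and let $f:X\to X$ be a function. Consider the statements: (1) $f$ is fully exact; (2) $F_n(f)$ is fully exact; (3) $SF_n(f)$ is fully exact. Then (2) and (3) are equivalent, and (2) implies (1).
   Context: A compactum is a nondegenerate compact, perfect, Hausdorff topological space. $F_n(X)$ is the set of nonempty subsets of $X$ with at most $n$ points, with the Vietoris topology; $F_1(X)=\{\{x\}:x\in X\}$; $F_n(f)(A)=f(A)$. $SF_n(X)=F_n(X)/F_1(X)$ is the quotient collapsing $F_1(X)$ to a point, $q$ the quotient map, $F_X=q(F_1(X))$, and $SF_n(f)(\chi)=q(F_n(f)(q^{-1}(\chi)))$ for $\chi\neq F_X$, $SF_n(f)(F_X)=F_X$. A function $g:Z\to Z$ is fully exact if for every pair of nonempty open $U,V\subseteq Z$ there is $k\in\mathbb{N}$ with $\mathrm{int}(g^k(U)\cap g^k(V))\neq\emptyset$. *)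

(* Defs.v *)
From HB Require Import structures.
From mathcomp Require Import all_boot all_order all_algebra.
From mathcomp Require Import all_classical all_reals all_analysis.
Set Implicit Arguments. Unset Strict Implicit. Unset Printing Implicit Defensive.
Import Order.TTheory GRing.Theory Num.Theory.
Local Open Scope classical_set_scope.

Definition compactum (X : topologicalType) : Prop :=
  [/\ exists x y : X, x <> y, compact [set: X], perfect_set [set: X]
    & hausdorff_space X].

(* Interior, relative to a subspace Z of a carrier T, of a set S, where
   [op] is the predicate "open in the space Z". *)
Definition rel_interior (T : Type) (Z : set T) (op : set T -> Prop) (S : set T)
  : set T :=
  \bigcup_(W in [set W | W `<=` Z /\ op W /\ W `<=` S]) W.

(* g : Z -> Z is fully exact (Z given by the carrier T, the subset Z and
   its family of open sets [op]). *)
Definition fully_exact (T : Type) (Z : set T) (op : set T -> Prop) (g : T -> T)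
  : Prop :=
  forall U V : set T, U `<=` Z -> V `<=` Z -> op U -> op V ->
    U !=set0 -> V !=set0 ->
    exists k : nat,
      rel_interior Z op ((iter k g @` U) `&` (iter k g @` V)) !=set0.

Section Hyperspace.
Variable X : topologicalType.

Definition Fn (n : nat) : set (set X) :=
  [set A | A !=set0 /\ exists s : seq X, size s <= n /\ A = [set x | x \in s]].

Definition F1 : set (set X) := [set A | exists x : X, A = [set x]].

(* Basic open sets of the Vietoris topology (finite intersections of the
   subbasic sets {A | A `<=` U} and {A | A meets V}). *)
Definition vietoris_basic (U : set X) (m : nat) (V : 'I_m -> set X)
  : set (set X) :=
  [set A | A `<=` U /\ forall i : 'I_m, A `&` V i !=set0].

Definition Fn_open (n : nat) (W : set (set X)) : Prop :=
  W `<=` Fn n /\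
  forall A, W A -> exists (U : set X) (m : nat) (V : 'I_m -> set X),
    [/\ open U, forall i, open (V i), vietoris_basic U V A
      & vietoris_basic U V `&` Fn n `<=` W].

Definition Fn_map (f : X -> X) (A : set X) : set X := f @` A.

(* SF_n(X) = F_n(X)/F_1(X): carrier option (set X); None is the point F_X,
   Some A (A in F_n(X) \ F_1(X)) is the class {A}. *)
Definition qmap (A : set X) : option (set X) :=
  if pselect (F1 A) then None else Some A.

Definition SFn (n : nat) : set (option (set X)) := qmap @` Fn n.

Definition SFn_open (n : nat) (W : set (option (set X))) : Prop :=
  W `<=` SFn n /\ Fn_open n (Fn n `&` qmap @^-1` W).

Definition SFn_map (f : X -> X) (chi : option (set X)) : option (set X) :=
  match chi with
  | None => None
  | Some A => qmap (Fn_map f A)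
  end.

End Hyperspace.

(* Main.v *)
Require Import Defs.
From HB Require Import structures.
From mathcomp Require Import all_boot all_order all_algebra.
From mathcomp Require Import all_classical all_reals all_analysis.
Local Open Scope classical_set_scope.

Set Implicit Arguments.
Section Helpers.
Variable X : topologicalType.

Lemma perf_pt : perfect_set [set: X] -> forall (x : X) O, open O -> O x ->
  exists y, y != x /\ O y.
Proof.
move=> [_ lp] x O oO Ox.
have : limit_point [set: X] x by rewrite lp.
move=> /(_ O (open_nbhs_nbhs (conj oO Ox))) [y [? _ ?]]; by exists y.
Qed.

Lemma sep_pt : hausdorff_space X -> forall x y : X, x != y ->
  exists Ox Oy : set X, [/\ open Ox, open Oy, Ox x, Oy y &
    forall z, Ox z -> Oy z -> False].
Proof.
rewrite open_hausdorff => H x y /H [[A B] /= [xA yB] [oA oB AB0]].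
exists A, B; split => //; first by move: xA; rewrite inE.
  by move: yB; rewrite inE.
move=> z Az Bz; move/eqP: AB0 => AB0.
have : (A `&` B) z by [].
by rewrite AB0.
Qed.

Lemma open_fincap (m : nat) (Vs : 'I_m -> set X) (a : X) :
  (forall i, open (Vs i)) -> open [set y | forall i, Vs i a -> Vs i y].
Proof.
move=> oV; rewrite openE => y Hy.
apply: (@filter_forall X 'I_m (fun i z => Vs i a -> Vs i z)) => i.
case: (pselect (Vs i a)) => h.
  apply: filterS (open_nbhs_nbhs (conj (oV i) (Hy i h))) => z zV _; exact: zV.
by apply: nearW => z /h.
Qed.


Lemma FnoI (n : nat) (W1 W2 : set (set X)) :
  Fn_open n W1 -> Fn_open n W2 -> Fn_open n (W1 `&` W2).
Proof.
move=> [W1F H1] [_ H2]; split; first by move=> A [/W1F].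
move=> A [/H1 [U1 [m1 [V1 [oU1 oV1 [AU1 AV1] S1]]]] /H2 [U2 [m2 [V2 [oU2 oV2 [AU2 AV2] S2]]]]].
pose Vc (i : 'I_(m1 + m2)) := match fintype.split i with inl j => V1 j | inr j => V2 j end.
exists (U1 `&` U2), (m1 + m2)%N, Vc; split.
- exact: openI.
- by move=> i; rewrite /Vc; case: (fintype.split i).
- split; first by move=> x Ax; split; [exact: AU1|exact: AU2].
  by move=> i; rewrite /Vc; case: (fintype.split i).
- move=> B [[BU BV] FB]; split.
  + apply: S1; split => //; split; first by move=> x /BU [].
    by move=> j; have := BV (unsplit (inl j)); rewrite /Vc unsplitK.
  + apply: S2; split => //; split; first by move=> x /BU [].
    by move=> j; have := BV (unsplit (inr j)); rewrite /Vc unsplitK.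
Qed.

Lemma basic_open (n : nat) (m : nat) (V : 'I_m -> set X) :
  (forall i, open (V i)) -> Fn_open n (vietoris_basic setT V `&` Fn n).
Proof.
move=> oV; split; first by move=> A [].
move=> A [bA FA]; exists setT, m, V; split => //; exact: openT.
Qed.

Lemma shrink (n : nat) (W : set (set X)) :
  perfect_set [set: X] -> hausdorff_space X -> (2 <= n)%N ->
  Fn_open n W -> W !=set0 ->
  exists W0, [/\ W0 `<=` W, Fn_open n W0, W0 !=set0 & forall B, W0 B -> ~ F1 B].
Proof.
move=> pX hX n2 Wo [A WA].
have [WF HW] := Wo.
have [[x Ax] _] := WF A WA.
have [y [B [yx WB Bx By]]] : exists y B, [/\ y != x, W B, B x & B y].
  case: (pselect (F1 A)) => [[z Az]|nA].
    have {}Az : A = [set x] by move: Ax; rewrite Az => ->.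
    have [U1 [m [V [oU1 oV [AU1 AV] S]]]] := HW A WA.
    have [y [yx U1y]] := perf_pt pX x U1 oU1 (AU1 x Ax).
    exists y, [set w | w \in [:: x; y]]; split => //; last by rewrite /= !inE eqxx orbT.
      apply: S; split; split.
      - by move=> w; rewrite /= !inE => /orP [/eqP->|/eqP->] //; exact: AU1.
      - move=> i; have [w [Aw Vw]] := AV i; exists w; split => //.
        by move: Aw; rewrite Az => ->; rewrite /= !inE eqxx.
      - by exists x; rewrite /= !inE eqxx.
      - by exists [:: x; y]; split.
    by rewrite /= !inE eqxx.
  have [y [Ay yx]] : exists y, A y /\ y != x.
    apply: contra_notP nA => H; exists x; apply/seteqP; split => w //=.
      by move=> Aw; apply/eqP/negPn/negP => wx; apply: H; exists w.
    by move=> ->.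
  by exists y, A; split.
have xy : x != y by rewrite eq_sym.
have [Ox [Oy [oOx oOy Oxx Oyy dis]]] := sep_pt hX x y xy.
pose V2 (i : 'I_2) := if val i == 0%N then Ox else Oy.
have oV2 : forall i, open (V2 i) by move=> i; rewrite /V2; case: ifP.
exists (W `&` (vietoris_basic setT V2 `&` Fn n)); split.
- by move=> ? [].
- by apply: FnoI => //; apply: basic_open.
- exists B; split => //; split; last exact: WF.
  split => // i; rewrite /V2; case: ifP => _; [by exists x | by exists y].
- move=> C [_ [[_ CV] _]] [z Cz].
  have [w1 [C1 O1]] := CV (@Ordinal 2 0 isT).
  have [w2 [C2 O2]] := CV (@Ordinal 2 1 isT).
  move: C1 C2 O1 O2; rewrite Cz /V2 /= => -> ->; exact: dis.
Qed.

Lemma q_comm (f : X -> X) (C : set X) :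
  qmap (Fn_map f C) = SFn_map f (qmap C).
Proof.
rewrite {2}/qmap; case: (pselect (F1 C)) => [[x Cx]|nC] //=.
rewrite /qmap Cx /Fn_map image_set1; case: pselect => // [[]]; by exists (f x).
Qed.

Lemma q_iter (f : X -> X) k (C : set X) :
  qmap (iter k (Fn_map f) C) = iter k (SFn_map f) (qmap C).
Proof. by elim: k => //= k IH; rewrite q_comm IH. Qed.

Lemma q_some (A : set X) : ~ F1 A -> qmap A = Some A.
Proof. by rewrite /qmap; case: pselect. Qed.

Lemma q_someE (A B : set X) : qmap A = Some B -> A = B.
Proof. by rewrite /qmap; case: pselect => // _ [->]. Qed.

Lemma q_preim n (W0 : set (set X)) : W0 `<=` Fn n ->
  (forall B, W0 B -> ~ F1 B) -> Fn n `&` (@qmap X) @^-1` ((@qmap X) @` W0) = W0.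
Proof.
move=> W0F W0s; apply/seteqP; split.
  move=> A [FA [B W0B qBA]]; have := q_some (W0s B W0B).
  by rewrite qBA => /q_someE ->.
by move=> A W0A; split; [exact: W0F | exists A].
Qed.

Lemma Fn_iter (f : X -> X) k (C : set X) :
  iter k (Fn_map f) C = iter k f @` C.
Proof.
elim: k => [|k IH].
  by apply/seteqP; split => x /=; [move=> Cx; exists x | move=> [y Cy <-]].
rewrite [LHS]/= IH /Fn_map; apply/seteqP; split => x /=.
  by move=> [_ [c Cc <-] <-]; exists c.
by move=> [c Cc <-]; exists (iter k f c) => //; exists c.
Qed.

End Helpers.
Unset Implicit Arguments.
Theorem theorem23 (X : topologicalType) (n : nat) (f : X -> X) :
  compactum X -> (2 <= n)%N ->
  (fully_exact (@Fn X n) (Fn_open (X:=X) n) (Fn_map f) <->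
   fully_exact (@SFn X n) (SFn_open (X:=X) n) (SFn_map f)) /\
  (fully_exact (@Fn X n) (Fn_open (X:=X) n) (Fn_map f) ->
   fully_exact [set: X] open f).
Proof.
move=> [_ _ pX hX] n2.
have shr := fun W => @shrink X n W pX hX n2.
have q_open : forall W0, Fn_open n W0 -> (forall B, W0 B -> ~ F1 B) ->
    SFn_open n ((@qmap X) @` W0).
  move=> W0 W0o W0s; split.
    by move=> _ [B W0B <-]; exists B => //; exact: W0o.1.
  by rewrite q_preim //; exact: W0o.1.
split; [split|].
- move=> FE U V UZ VZ [_ Uo] [_ Vo] [u Uu] [v Vv].
  have [A FA qA] := UZ u Uu.
  have [B FB qB] := VZ v Vv.
  have := FE (Fn n `&` (@qmap X) @^-1` U) (Fn n `&` (@qmap X) @^-1` V)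
    ltac:(by move=> ? []) ltac:(by move=> ? []) Uo Vo.
  case.
    by exists A; split => //; rewrite /= qA.
    by exists B; split => //; rewrite /= qB.
  move=> k [C [W [WZ [Wo WS]] WC]].
  have [W0 [W0W W0o [B0 W0B0] W0s]] := shr W Wo (ex_intro _ C WC).
  exists k, (qmap B0), ((@qmap X) @` W0); last by exists B0.
  split; last split.
  + by move=> _ [B1 W0B <-]; exists B1 => //; exact: W0o.1.
  + exact: q_open.
  + move=> _ [B1 W0B <-].
    have [[C1 [FC1 UC1] eC1] [D1 [FD1 VD1] eD1]] := WS B1 (W0W B1 W0B).
    by split; [exists (qmap C1) => //; rewrite -q_iter eC1
              |exists (qmap D1) => //; rewrite -q_iter eD1].
- move=> FE U V UZ VZ Uo Vo U0 V0.
  have [U1 [U1U U1o [a U1a] U1s]] := shr U Uo U0.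
  have [V1 [V1U V1o [b V1b] V1s]] := shr V Vo V0.
  have := FE ((@qmap X) @` U1) ((@qmap X) @` V1) _ _ (q_open _ U1o U1s) (q_open _ V1o V1s).
  case.
    by move=> _ [B1 W0B <-]; exists B1 => //; exact: U1o.1.
    by move=> _ [B1 W0B <-]; exists B1 => //; exact: V1o.1.
    by exists (qmap a), a.
    by exists (qmap b), b.
  move=> k [chi [W [WZ [Wo WS]] Wchi]].
  have [A FA qA] := WZ chi Wchi.
  have [W0 [W0W W0o [B0 W0B0] W0s]] :=
    shr (Fn n `&` (@qmap X) @^-1` W) Wo.2 (ex_intro _ A (conj FA (eq_ind_r W Wchi qA))).
  exists k, B0, W0 => //; split; first exact: W0o.1.
  split => // B1 W0B.
  have [FB WqB] := W0W B1 W0B.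
  have [[c [C U1C <-] eC] [d [D V1D <-] eD]] := WS _ WqB.
  rewrite -q_iter (q_some (W0s B1 W0B)) in eC.
  rewrite -q_iter (q_some (W0s B1 W0B)) in eD.
  split; [exists C; [exact: U1U | exact: q_someE eC]
         |exists D; [exact: V1U | exact: q_someE eD]].
- move=> FE U V _ _ Uo Vo [u Uu] [v Vv].
  have oU' : forall U0 : set X, open U0 ->
      Fn_open n [set A | Fn n A /\ A `<=` U0].
    move=> U0 oU0; split; first by move=> ? [].
    move=> A [FA AU]; exists U0, 0%N, (fun _ => set0); split => //; first by case.
      by split => //; case.
    by move=> B [[BU _] FB].
  have neU : forall (U0 : set X) u0, U0 u0 -> [set A | Fn n A /\ A `<=` U0] !=set0.
    move=> U0 u0 Uu0; exists [set x | x \in [:: u0]]; split.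
      split; first by exists u0; rewrite /= inE.
      by exists [:: u0]; split => //; apply: leq_trans n2.
    by move=> x; rewrite /= inE => /eqP->.
  have := FE [set A | Fn n A /\ A `<=` U] [set A | Fn n A /\ A `<=` V]
    ltac:(by move=> ? []) ltac:(by move=> ? []) (oU' U Uo) (oU' V Vo)
    (neU U u Uu) (neU V v Vv).
  case=> k [A [W [WZ [Wo WS]] WA]].
  have [U1 [m [Vs [oU1 oV [AU1 AV] S]]]] := Wo.2 A WA.
  have [[a Aa] [s [ss As]]] := WZ A WA.
  have as_ : a \in s by move: Aa; rewrite As.
  exists k, a, [set y | U1 y /\ forall i, Vs i a -> Vs i y]; last by split => //; apply: AU1.
  split => //; split; first by have := openI oU1 (@open_fincap X m Vs a oV).
  move=> y [U1y Vy].
  pose B := [set x | x \in y :: seq.filter (predC1 a) s].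
  have yB : B y by rewrite /B /= inE eqxx.
  have WB : W B.
    apply: S; split; [split|].
    - move=> x; rewrite /B /= inE => /orP [/eqP -> //|].
      rewrite mem_filter => /andP [_ xs]; apply: AU1; rewrite As; exact: xs.
    - move=> i; have [z [Az Vz]] := AV i.
      case: (eqVneq z a) => [za|za].
        by exists y; split => //; apply: Vy; rewrite -za.
      exists z; split => //; rewrite /B /= inE mem_filter /= za /=.
      by move: Az; rewrite As => ->; rewrite orbT.
    - split; first by exists y.
      exists (y :: seq.filter (predC1 a) s); split => //.
      rewrite /= size_filter.
      have h1 := count_predC (pred1 a) s.
      have h2 : (0 < count (pred1 a) s)%N by rewrite -has_count has_pred1.
      have e : count (predC1 a) s = count (predC (pred1 a)) s by apply: eq_count.
      rewrite e; apply: leq_trans ss; rewrite -h1.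
      by rewrite -addn1 addnC leq_add2r.
  have [[C [FC CU] eC] [D [FD DV] eD]] := WS B WB.
  rewrite Fn_iter in eC; rewrite Fn_iter in eD.
  split.
    by move: yB; rewrite -eC => -[c Cc <-]; exists c => //; apply: CU.
  by move: yB; rewrite -eD => -[c Cc <-]; exists c => //; apply: DV.
Qed.
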